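(* Let $V=\{1,\dots,p\}$ and $F:2^V\to\mathbb{R}$ be submodular, nondecreasing, with $F(\varnothing)=0$ and $F(\{k\})>0$ for all $k$. Let $\Omega(w)=f(|w|)$ with $f$ the Lovász extension of $F$. Let $w\in\mathbb{R}^p$ with support $J=\mathrm{Supp}(w)$ and let $H$ be the smallest stable set containing $J$. Then, identifying $\mathbb{R}^V=\mathbb{R}^J\times\mathbb{R}^{H\setminus J}\times\mathbb{R}^{H^c}$, the subdifferential of $\Omega$ at $w$ is $$\partial\Omega(w)=\partial\Omega_J(w_J)\times\{0\}\times\{s_{H^c}\in\mathbb{R}^{H^c}:(\Omega^H)^\ast(s_{H^c})\leqslant1\}.$$
   Context: The Lovász extension of a set-function $G$ on a finite set $W$: for $w\in\mathbb{R}_+^W$ with $w_{j_1}\geqslant\cdots\geqslant w_{j_m}\geqslant0$, it equals $\sum_k w_{j_k}[G(\{j_1,\dots,j_k\})-G(\{j_1,\dots,j_{k-1}\})]$. A set $A\subset V$ is stable if every strict superset $B\supsetneq A$ has $F(B)>F(A)$; stable sets are closed under intersection and $V$ is stable, so the smallest stable set containing $J$ exists. For $K\subset V$: $\Omega_K(u)=f_K(|u|)$ on $\mathbb{R}^K$, where $f_K$ is the Lovász extension of the restriction $F_K(A)=F(A)$, $A\subset K$; $\Omega^K(v)=f^K(|v|)$ on $\mathbb{R}^{K^c}$, where $f^K$ is the Lovász extension of the contraction $F^K(A)=F(A\cup K)-F(K)$, $A\subset K^c$; $(\Omega^H)^\ast(s)=\max\{s^\top v:\Omega^H(v)\leqslant1\}$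 is the dual norm of $\Omega^H$. *)

(* Defs.v *)
From HB Require Import structures.
From mathcomp Require Import all_boot all_order all_algebra.
From mathcomp Require Import classical_sets reals.
Set Implicit Arguments. Unset Strict Implicit. Unset Printing Implicit Defensive.
Import Order.TTheory GRing.Theory Num.Theory.
Local Open Scope ring_scope.


(* A vector of R^W (W a subset of V) is represented by
   a function 'I_p -> R of which only the coordinates in W are read. *)

Section Lovasz.
Variables (R : realType) (p : nat).

Fixpoint lovasz_aux (G : {set 'I_p} -> R) (w : 'I_p -> R)
    (prefix : {set 'I_p}) (s : seq 'I_p) : R :=
  match s with
  | [::] => 0
  | j :: s' => w j * (G (j |: prefix) - G prefix)
               + lovasz_aux G w (j |: prefix) s'
  end.

Definition lovasz (W : {set 'I_p}) (G : {set 'I_p} -> R) (w : 'I_p -> R) : R :=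
  lovasz_aux G w finset.set0 (sort (fun i j => w j <= w i) (enum W)).

Definition vabs (w : 'I_p -> R) : 'I_p -> R := fun i => `|w i|.

Definition Omega (F : {set 'I_p} -> R) (w : 'I_p -> R) : R :=
  lovasz [set: 'I_p] F (vabs w).

Definition Omega_restr (F : {set 'I_p} -> R) (K : {set 'I_p})
    (u : 'I_p -> R) : R :=
  lovasz K F (vabs u).

Definition Omega_contr (F : {set 'I_p} -> R) (K : {set 'I_p})
    (v : 'I_p -> R) : R :=
  lovasz (~: K) (fun A => F (A :|: K) - F K) (vabs v).

Definition subdiff (W : {set 'I_p}) (g : ('I_p -> R) -> R) (w : 'I_p -> R)
  : set ('I_p -> R) :=
  (fun s => forall v : 'I_p -> R,
      g w + \sum_(i in W) s i * (v i - w i) <= g v).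

Definition dual_Omega_contr (F : {set 'I_p} -> R) (H : {set 'I_p})
    (s : 'I_p -> R) : R :=
  sup (fun x : R => exists2 v : 'I_p -> R,
          Omega_contr F H v <= 1 & x = \sum_(i in ~: H) s i * v i).

Definition submodular (F : {set 'I_p} -> R) :=
  forall A B : {set 'I_p}, F (A :|: B) + F (A :&: B) <= F A + F B.

Definition nondecreasing_setfun (F : {set 'I_p} -> R) :=
  forall A B : {set 'I_p}, A \subset B -> F A <= F B.

Definition stable (F : {set 'I_p} -> R) (A : {set 'I_p}) :=
  forall B : {set 'I_p}, A \proper B -> F A < F B.

Definition supp (w : 'I_p -> R) : {set 'I_p} := [set i | w i != 0].

Definition smallest_stable_containing (F : {set 'I_p} -> R)
    (J H : {set 'I_p}) :=
  [/\ stable F H, J \subset H &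
      forall A : {set 'I_p}, stable F A -> J \subset A -> H \subset A].

End Lovasz.

(* Main.v *)
Require Import Defs.
From HB Require Import structures.
From mathcomp Require Import all_boot all_order all_algebra.
From mathcomp Require Import classical_sets reals.
From mathcomp Require Import ring lra.
Set Implicit Arguments. Unset Strict Implicit. Unset Printing Implicit Defensive.
Import Order.TTheory GRing.Theory Num.Theory.
Local Open Scope ring_scope.

Fixpoint gvec_aux (R : realType) (p : nat) (G : {set 'I_p} -> R)
   (P : {set 'I_p}) (s : seq 'I_p) (i : 'I_p) : R :=
  match s with
  | [::] => 0
  | j :: s' => if i == j then G (j |: P) - G P else gvec_aux G (j |: P) s' i
  end.

Lemma lov_gvec (R : realType) (p : nat) (G : {set 'I_p} -> R) (x : 'I_p -> R)
  (s : seq 'I_p) (P : {set 'I_p}) : uniq s ->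
  lovasz_aux G x P s = \sum_(i <- s) gvec_aux G P s i * x i.
Proof.
elim: s P => [|j s IH] P /=; first by rewrite big_nil.
move=> /andP[js us]; rewrite big_cons eqxx IH //; congr (_ + _); first by rewrite mulrC.
apply: eq_big_seq => i ii; have /negbTE -> // : i != j.
by apply: contraNneq js => <-.
Qed.

Lemma gvec_pm (R : realType) (p : nat) (G : {set 'I_p} -> R)
  (Gsub : submodular G) (s : seq 'I_p) (P A : {set 'I_p}) : uniq s ->
  \sum_(i <- s | i \in A) gvec_aux G P s i <=
     G (A :&: (P :|: [set i | i \in s])) - G (A :&: P).
Proof.
elim: s P => [|j s IH] P.
  rewrite big_nil; have -> : P :|: [set i | i \in [::]] = P.
    by apply/setP => i; rewrite !inE orbF.
  by rewrite subrr.
move=> /andP[js us]; rewrite big_cons.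
have E : \sum_(i <- s | i \in A) gvec_aux G P (j :: s) i =
         \sum_(i <- s | i \in A) gvec_aux G (j |: P) s i.
  rewrite big_seq_cond [RHS]big_seq_cond; apply: eq_bigr => i /andP[ii _] /=.
  have /negbTE -> // : i != j by apply: contraNneq js => <-.
rewrite E; have {}IH := IH (j |: P) us.
have U : (j |: P) :|: [set i | i \in s] = P :|: [set i | i \in j :: s].
  by apply/setP => i; rewrite !inE orbA [(i == j) || _]orbC.
rewrite U in IH; rewrite /= eqxx.
case: ifP => jA.
  have S := Gsub P (A :&: (j |: P)).
  have E1 : P :|: A :&: (j |: P) = j |: P.
    apply/setP => i; rewrite !inE; case: (eqVneq i j) => [->|] /=; first by rewrite jA orbT.
    by case: (i \in P) => //=; rewrite andbF.
  have E2 : P :&: (A :&: (j |: P)) = A :&: P.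
    apply/setP => i; rewrite !inE; case: (i \in P); case: (i \in A) => //=; by rewrite ?orbT ?andbF.
  rewrite E1 E2 in S; lra.
have E3 : A :&: (j |: P) = A :&: P.
  apply/setP => i; rewrite !inE; case: (eqVneq i j) => [->|] /=; first by rewrite jA.
  by [].
by rewrite E3 in IH.
Qed.

Lemma gvec_cat (R : realType) (p : nat) (G : {set 'I_p} -> R)
  (s1 s2 : seq 'I_p) (P : {set 'I_p}) i : i \in s1 ->
  gvec_aux G P (s1 ++ s2) i = gvec_aux G P s1 i.
Proof.
elim: s1 P => [|j s IH] P //=.
rewrite inE; case: eqP => // _ /= ii; exact: IH.
Qed.
Definition Dq (R : realType) (p : nat) (G : {set 'I_p} -> R) (t x : 'I_p -> R)
  (P : {set 'I_p}) (c : R) (s : seq 'I_p) : R :=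
  lovasz_aux G x P s + c * (G P - \sum_(i in P) t i) - \sum_(i <- s) t i * x i.

Definition pmW (R : realType) (p : nat) (W : {set 'I_p}) (G : {set 'I_p} -> R)
  (t : 'I_p -> R) := forall A : {set 'I_p}, A \subset W -> \sum_(i in A) t i <= G A.

Lemma Dcons (R : realType) (p : nat) (G : {set 'I_p} -> R) (t x : 'I_p -> R)
  (P : {set 'I_p}) (c : R) (j : 'I_p) (s : seq 'I_p) : j \notin P ->
  Dq G t x P c (j :: s) = Dq G t x (j |: P) (x j) s + (c - x j) * (G P - \sum_(i in P) t i).
Proof.
move=> jP; rewrite /Dq /= big_setU1 // big_cons /=.
set a := lovasz_aux _ _ _ _; set b := \sum_(i in P) t i; set d := \sum_(i <- s) _.
ring.
Qed.

Lemma Dge0 (R : realType) (p : nat) (G : {set 'I_p} -> R) (t x : 'I_p -> R)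
  (W : {set 'I_p}) (ht : pmW W G t) (s : seq 'I_p) : forall (P : {set 'I_p}) (c : R), uniq s -> (forall i, i \in s -> i \notin P) ->
  P \subset W -> (forall i, i \in s -> i \in W) -> (forall i, i \in s -> 0 <= x i) ->
  0 <= c -> path (fun a b => b <= a) c (map x s) -> 0 <= Dq G t x P c s.
Proof.
elim: s => [|j s IH] P c.
  move=> _ _ PW _ _ c0 _; rewrite /Dq /= big_nil subr0 add0r.
  by apply: mulr_ge0 => //; rewrite subr_ge0; exact: ht.
move=> /andP[js us] dis PW sW x0 c0 /= /andP[cj pth].
have jP : j \notin P by apply: dis; rewrite inE eqxx.
rewrite Dcons //; apply: addr_ge0.
  have h1 : forall i, i \in s -> i \notin j |: P.
    move=> i ii; rewrite !inE negb_or; apply/andP; split.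
      by apply: contraNneq js => <-.
    by apply: dis; rewrite inE ii orbT.
  have h2 : j |: P \subset W.
    by apply/fintype.subsetP => i; rewrite !inE => /orP[/eqP ->|/(fintype.subsetP PW)//]; apply: sW; rewrite inE eqxx.
  have h3 : forall i, i \in s -> i \in W by move=> i ii; apply: sW; rewrite inE ii orbT.
  have h4 : forall i, i \in s -> 0 <= x i by move=> i ii; apply: x0; rewrite inE ii orbT.
  have h5 : 0 <= x j by apply: x0; rewrite inE eqxx.
  exact: IH.
apply: mulr_ge0; first by rewrite subr_ge0.
by rewrite subr_ge0; exact: ht.
Qed.

Lemma Dcat (R : realType) (p : nat) (G : {set 'I_p} -> R) (t x : 'I_p -> R)
  (W : {set 'I_p}) (ht : pmW W G t) (s1 s2 : seq 'I_p) : forall (P : {set 'I_p}) (c : R), uniq (s1 ++ s2) ->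
  (forall i, i \in s1 ++ s2 -> i \notin P) ->
  P \subset W -> (forall i, i \in s1 ++ s2 -> i \in W) ->
  (forall i, i \in s1 ++ s2 -> 0 <= x i) ->
  0 <= c -> path (fun a b => b <= a) c (map x (s1 ++ s2)) ->
  Dq G t x (P :|: [set i | i \in s1]) (last c (map x s1)) s2 <= Dq G t x P c (s1 ++ s2).
Proof.
elim: s1 => [|j s IH] P c.
  move=> *; have -> : P :|: [set i | i \in [::]] = P by apply/setP => i; rewrite !inE orbF.
  by [].
move=> /andP[js us] dis PW sW x0 c0 /= /andP[cj pth].
have jP : j \notin P by apply: dis; rewrite inE eqxx.
rewrite Dcons //.
have -> : P :|: [set i | i \in j :: s] = (j |: P) :|: [set i | i \in s].
  by apply/setP => i; rewrite !inE orbA [(i == j) || _]orbC.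
rewrite -[X in X <= _]addr0; apply: lerD.
  have h1 : forall i, i \in s ++ s2 -> i \notin j |: P.
    move=> i ii; rewrite !inE negb_or; apply/andP; split.
      by apply: contraNneq js => <-.
    by apply: dis; rewrite inE ii orbT.
  have h2 : j |: P \subset W.
    by apply/fintype.subsetP => i; rewrite !inE => /orP[/eqP ->|/(fintype.subsetP PW)//]; apply: sW; rewrite inE eqxx.
  have h3 : forall i, i \in s ++ s2 -> i \in W by move=> i ii; apply: sW; rewrite inE ii orbT.
  have h4 : forall i, i \in s ++ s2 -> 0 <= x i by move=> i ii; apply: x0; rewrite inE ii orbT.
  have h5 : 0 <= x j by apply: x0; rewrite inE eqxx.
  exact: IH.
apply: mulr_ge0; first by rewrite subr_ge0.
by rewrite subr_ge0; exact: ht.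
Qed.

Lemma Dzero (R : realType) (p : nat) (G : {set 'I_p} -> R) (t x : 'I_p -> R)
  (W : {set 'I_p}) (ht : pmW W G t) (s : seq 'I_p) (P : {set 'I_p}) (c : R) : uniq s -> (forall i, i \in s -> i \notin P) ->
  P \subset W -> (forall i, i \in s -> i \in W) -> (forall i, i \in s -> x i = 0) ->
  0 <= c -> c * (G P - \sum_(i in P) t i) <= Dq G t x P c s.
Proof.
case: s => [|j s] us dis PW sW x0 c0.
  by rewrite /Dq /= big_nil subr0 add0r.
have jP : j \notin P by apply: dis; rewrite inE eqxx.
rewrite Dcons // (x0 j (mem_head _ _)) subr0 lerDr.
move: us => /andP[js us].
apply: (Dge0 ht) => //.
- move=> i ii; rewrite !inE negb_or; apply/andP; split.
    by apply: contraNneq js => <-.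
  by apply: dis; rewrite inE ii orbT.
- by apply/fintype.subsetP => i; rewrite !inE => /orP[/eqP ->|/(fintype.subsetP PW)//]; apply: sW; rewrite inE eqxx.
- by move=> i ii; apply: sW; rewrite inE ii orbT.
- by move=> i ii; rewrite x0 // inE ii orbT.
- rewrite (_ : map x s = nseq (size s) 0); last first.
    apply: (@eq_from_nth _ 0); first by rewrite size_map size_nseq.
    by move=> k; rewrite size_map => ks; rewrite nth_nseq ks (nth_map j) // x0 // inE mem_nth ?orbT.
  by elim: (size s) => //= n ->; rewrite lexx.
Qed.
Definition sig (R : realType) (p : nat) (W : {set 'I_p}) (x : 'I_p -> R) :=
  sort (fun i j => x j <= x i) (enum W).

Lemma sig_uniq (R : realType) (p : nat) (W : {set 'I_p}) (x : 'I_p -> R) : uniq (sig W x).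
Proof. by rewrite sort_uniq enum_uniq. Qed.

Lemma sig_mem (R : realType) (p : nat) (W : {set 'I_p}) (x : 'I_p -> R) i :
  (i \in sig W x) = (i \in W).
Proof. by rewrite mem_sort mem_enum. Qed.

Lemma sig_sorted (R : realType) (p : nat) (W : {set 'I_p}) (x : 'I_p -> R) :
  sorted (fun i j => x j <= x i) (sig W x).
Proof. by apply: sort_sorted => i j; exact: le_total. Qed.

Lemma sig_sum (R : realType) (p : nat) (W : {set 'I_p}) (x f : 'I_p -> R) :
  \sum_(i <- sig W x) f i = \sum_(i in W) f i.
Proof. by rewrite big_uniq ?sig_uniq //; apply: eq_bigl => i; rewrite sig_mem. Qed.

Lemma seq_set_sum (R : realType) (p : nat) (s : seq 'I_p) (A : {set 'I_p}) (f : 'I_p -> R) :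
  uniq s -> (forall i, i \in A -> i \in s) ->
  \sum_(i <- s | i \in A) f i = \sum_(i in A) f i.
Proof.
move=> us As; rewrite -big_filter big_uniq ?filter_uniq //.
apply: eq_bigl => i; rewrite mem_filter; case iA: (i \in A) => //=; exact: As.
Qed.

Lemma path_head (R : realType) (p : nat) (x : 'I_p -> R) (s : seq 'I_p) :
  sorted (fun i j => x j <= x i) s ->
  path (fun a b => b <= a) (head 0 (map x s)) (map x s).
Proof. by case: s => //= j s H; rewrite lexx /= path_map. Qed.

Lemma lov_ub (R : realType) (p : nat) (W : {set 'I_p}) (G : {set 'I_p} -> R)
  (t x : 'I_p -> R) : pmW W G t -> G finset.set0 = 0 -> (forall i, i \in W -> 0 <= x i) ->
  \sum_(i in W) t i * x i <= lovasz W G x.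
Proof.
move=> ht G0 x0.
have := Dge0 (x := x) ht (P := finset.set0) (c := head 0 (map x (sig W x))) (sig_uniq W x).
rewrite /Dq G0 big_set0 subrr mulr0 addr0 sig_sum subr_ge0; apply.
- by move=> i _; rewrite inE.
- exact: finset.sub0set.
- by move=> i; rewrite sig_mem.
- by move=> i; rewrite sig_mem; apply: x0.
- have := sig_sorted W x; have : forall i, i \in sig W x -> 0 <= x i.
    by move=> i; rewrite sig_mem; apply: x0.
  by case: (sig W x) => //= j s H _; apply: H; rewrite inE eqxx.
- exact: path_head (sig_sorted W x).
Qed.

Lemma lov_rep (R : realType) (p : nat) (W : {set 'I_p}) (G : {set 'I_p} -> R)
  (x : 'I_p -> R) : submodular G -> G finset.set0 = 0 ->
  exists t, pmW W G t /\ lovasz W G x = \sum_(i in W) t i * x i.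
Proof.
move=> Gs G0; exists (gvec_aux G finset.set0 (sig W x)); split.
  move=> A AW; rewrite -(seq_set_sum _ (s := sig W x)) ?sig_uniq //; last first.
    by move=> i iA; rewrite sig_mem; apply: (fintype.subsetP AW).
  apply: le_trans (@gvec_pm R p G Gs (sig W x) finset.set0 A (sig_uniq W x)) _.
  rewrite finset.setI0 G0 subr0 le_eqVlt; apply/orP; left; apply/eqP; congr G; apply/setP => i.
  rewrite !inE sig_mem; case iA: (i \in A) => //=; exact: (fintype.subsetP AW).
by rewrite /lovasz lov_gvec ?sig_uniq // -/(sig W x) sig_sum.
Qed.

Lemma lov_ind (R : realType) (p : nat) (W A : {set 'I_p}) (G : {set 'I_p} -> R) (k : R) :
  submodular G -> G finset.set0 = 0 -> A \subset W -> 0 <= k ->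
  lovasz W G (fun i => if i \in A then k else 0) <= k * G A.
Proof.
move=> Gs G0 AW k0; have [t [ht ->]] := lov_rep W (fun i => if i \in A then k else 0) Gs G0.
have -> : \sum_(i in W) t i * (if i \in A then k else 0) = \sum_(i in A) t i * k.
  rewrite (big_setID A) /= [X in _ + X]big1 ?addr0; last first.
    by move=> i; rewrite inE => /andP[/negbTE -> _]; rewrite mulr0.
  have -> : W :&: A = A by apply/finset.setIidPr.
  by apply: eq_bigr => i ->.
by rewrite -big_distrl /= mulrC ler_wpM2l // ht.
Qed.

Lemma lov_hom (R : realType) (p : nat) (W : {set 'I_p}) (G : {set 'I_p} -> R)
  (x : 'I_p -> R) (k : R) : submodular G -> G finset.set0 = 0 -> 0 <= k ->
  (forall i, i \in W -> 0 <= x i) ->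
  lovasz W G (fun i => k * x i) <= k * lovasz W G x.
Proof.
move=> Gs G0 k0 x0; have [t [ht ->]] := lov_rep W (fun i => k * x i) Gs G0.
have -> : \sum_(i in W) t i * (k * x i) = k * \sum_(i in W) t i * x i.
  by rewrite big_distrr; apply: eq_bigr => i _ /=; rewrite mulrCA.
by rewrite ler_wpM2l // lov_ub.
Qed.

Lemma lov_zero (R : realType) (p : nat) (W : {set 'I_p}) (G : {set 'I_p} -> R)
  (x : 'I_p -> R) : submodular G -> G finset.set0 = 0 -> (forall i, x i = 0) -> lovasz W G x = 0.
Proof.
move=> Gs G0 x0; have [t [ht ->]] := lov_rep W x Gs G0.
by rewrite big1 // => i _; rewrite x0 mulr0.
Qed.
Lemma sum_lin (R : realType) (p : nat) (W : {set 'I_p}) (s u w : 'I_p -> R) (l : R) :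
  \sum_(i in W) s i * (l * u i - w i) = l * \sum_(i in W) s i * u i - \sum_(i in W) s i * w i.
Proof. by rewrite mulr_sumr -sumrB; apply: eq_bigr => i _; ring. Qed.

Lemma sum_abs (R : realType) (p : nat) (W : {set 'I_p}) (s v : 'I_p -> R) :
  \sum_(i in W) s i * v i <= \sum_(i in W) vabs s i * vabs v i.
Proof.
apply: ler_sum => i _; rewrite /vabs -normrM; exact: ler_norm.
Qed.

Lemma subdiff_char (R : realType) (p : nat) (W : {set 'I_p}) (G : {set 'I_p} -> R)
  (Gs : submodular G) (G0 : G finset.set0 = 0) (w s : 'I_p -> R) :
  subdiff W (fun v => lovasz W G (vabs v)) w s <->
  pmW W G (vabs s) /\ \sum_(i in W) s i * w i = lovasz W G (vabs w).
Proof.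
have absge : forall (v : 'I_p -> R) i, 0 <= vabs v i by move=> v i; rewrite /vabs normr_ge0.
split.
- move=> hs.
  have key : forall u, \sum_(i in W) s i * u i <= lovasz W G (vabs u).
    move=> u; rewrite -subr_le0.
    set d := _ - _.
    set e := \sum_(i in W) s i * w i - lovasz W G (vabs w).
    have H : forall l, 0 < l -> l * d <= e.
      move=> l l0; have := hs (fun i => l * u i).
      have -> : vabs (fun i => l * u i) = (fun i => l * vabs u i).
        by apply: boolp.funext => i; rewrite /vabs normrM gtr0_norm.
      have Hl := @lov_hom R p W G (vabs u) l Gs G0 (ltW l0) (fun i _ => absge u i).
      rewrite sum_lin /d /e => h.
      set Su := \sum_(i in W) s i * u i in h *.
      set Lu := lovasz W G (vabs u) in Hl *.
      set Lw := lovasz W G (vabs w) in h *.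
      set Sw := \sum_(i in W) s i * w i in h *.
      set Llu := lovasz W G _ in h Hl.
      rewrite mulrBr; lra.
    rewrite leNgt; apply/negP => d0.
    have := H ((`|e| + 1) / d); rewrite divfK ?gt_eqF // => h.
    have : 0 < (`|e| + 1) / d by apply: divr_gt0 => //; rewrite ltr_pwDr ?normr_ge0.
    move/h; have := ler_norm e; lra.
  split.
  + move=> A AW.
    pose u : 'I_p -> R := fun i => if i \in A then (if 0 <= s i then 1 else -1) else 0.
    have := key u.
    have -> : vabs u = (fun i => if i \in A then 1 else 0).
      apply: boolp.funext => i; rewrite /vabs /u; case: (i \in A); last exact: normr0.
      by case: ifP => _; rewrite ?normrN normr1.
    have -> : \sum_(i in W) s i * u i = \sum_(i in A) vabs s i.
      rewrite (big_setID A) /= [X in _ + X]big1 ?addr0; last first.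
        by move=> i; rewrite inE /u => /andP[/negbTE -> _]; rewrite mulr0.
      have -> : W :&: A = A by apply/finset.setIidPr.
      apply: eq_bigr => i iA; rewrite /vabs /u iA.
      by case: (lerP 0 (s i)) => h; [rewrite ger0_norm // mulr1 | rewrite ltr0_norm // mulrN1].
    move=> h; apply: le_trans h _; rewrite -[X in _ <= X]mul1r.
    exact: lov_ind.
  + apply: le_anti; rewrite key /=.
    have := hs (fun _ => 0).
    rewrite (@lov_zero R p W G (vabs (fun _ => 0)) Gs G0); last by move=> i; rewrite /vabs normr0.
    have -> : \sum_(i in W) s i * (0 - w i) = - \sum_(i in W) s i * w i.
      by rewrite -sumrN; apply: eq_bigr => i _; rewrite sub0r mulrN.
    lra.
- move=> [hp he] v; rewrite /=.
  have -> : \sum_(i in W) s i * (v i - w i) = \sum_(i in W) s i * v i - \sum_(i in W) s i * w i.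
    by rewrite -sumrB; apply: eq_bigr => i _; rewrite mulrBr.
  rewrite he addrC subrK; apply: le_trans (sum_abs W s v) _.
  apply: lov_ub => // i _; exact: absge.
Qed.
Lemma lov_restr (R : realType) (p : nat) (J : {set 'I_p}) (G : {set 'I_p} -> R)
  (Gs : submodular G) (G0 : G finset.set0 = 0) (x : 'I_p -> R) :
  (forall i, 0 <= x i) -> (forall i, i \notin J -> x i = 0) ->
  lovasz J G x = lovasz [set: 'I_p] G x.
Proof.
move=> x0 xJ.
have sumJ : forall t : 'I_p -> R, \sum_(i in [set: 'I_p]) t i * x i = \sum_(i in J) t i * x i.
  move=> t; rewrite (big_setID J) /= [X in _ + X]big1 ?addr0; last first.
    by move=> i; rewrite inE => /andP[/xJ -> _]; rewrite mulr0.
  by rewrite finset.setTI.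
apply: le_anti; apply/andP; split.
- pose tau := sig J x ++ enum (~: J).
  have ut : uniq tau.
    rewrite cat_uniq sig_uniq enum_uniq /= andbT; apply/hasPn => i.
    by rewrite mem_enum inE /= sig_mem.
  have allt : forall i, i \in tau.
    by move=> i; rewrite mem_cat sig_mem mem_enum inE; case: (i \in J).
  pose t := gvec_aux G finset.set0 tau.
  have ht : pmW [set: 'I_p] G t.
    move=> A _; rewrite -(seq_set_sum _ (s := tau)) //.
    apply: le_trans (@gvec_pm R p G Gs tau finset.set0 A ut) _.
    rewrite finset.setI0 G0 subr0 le_eqVlt; apply/orP; left; apply/eqP; congr G.
    by apply/setP => i; rewrite !inE allt andbT.
  have := lov_ub ht G0 (fun i _ => x0 i); rewrite sumJ.
  suff -> : \sum_(i in J) t i * x i = lovasz J G x by [].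
  rewrite /lovasz lov_gvec ?sig_uniq // -/(sig J x) -(sig_sum J x).
  apply: eq_big_seq => i ii; congr (_ * _); exact: gvec_cat.
- have [t [ht ->]] := lov_rep [set: 'I_p] x Gs G0; rewrite sumJ.
  apply: lov_ub => //; move=> A AJ; apply: ht; exact: finset.subsetT.
Qed.
Lemma sorted_split (R : realType) (p : nat) (x : 'I_p -> R) (s : seq 'I_p) :
  sorted (fun i j => x j <= x i) s ->
  filter (fun i => 0 < x i) s ++ filter (fun i => ~~ (0 < x i)) s = s.
Proof.
elim: s => //= j s IH H.
have Hs := path_sorted H.
case: ifP => xj /=; first by rewrite IH.
have tr : transitive (fun i j => x j <= x i).
  by move=> b a c h1 h2; exact: le_trans h2 h1.
have /allP al := order_path_min tr H.
have an : forall i, i \in s -> ~~ (0 < x i).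
  move=> i /al /= h; apply/negP => h2; move/negP: xj; apply; exact: lt_le_trans h2 h.
rewrite (@eq_in_filter _ _ pred0) ?filter_pred0; last by move=> i /an /negbTE.
rewrite (@eq_in_filter _ _ predT) ?filter_predT //; by move=> i /an ->.
Qed.

Lemma lov_tight (R : realType) (p : nat) (G : {set 'I_p} -> R) (t x : 'I_p -> R) :
  pmW [set: 'I_p] G t -> G finset.set0 = 0 -> (forall i, 0 <= x i) ->
  \sum_(i in [set: 'I_p]) t i * x i = lovasz [set: 'I_p] G x ->
  \sum_(i in [set i | 0 < x i]) t i = G [set i | 0 < x i].
Proof.
move=> ht G0 x0 eq.
pose sg := sig [set: 'I_p] x.
pose s1 := filter (fun i => 0 < x i) sg.
pose s2 := filter (fun i => ~~ (0 < x i)) sg.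
have sp : s1 ++ s2 = sg := sorted_split (sig_sorted _ _).
pose c := head 0 (map x sg).
have c0 : 0 <= c by rewrite /c /sg; case: (sig _ _) => //= j _; exact: x0.
have D0 : Dq G t x finset.set0 c sg = 0.
  rewrite /Dq G0 big_set0 subrr mulr0 addr0 sig_sum eq.
  by rewrite /lovasz subrr.
have Q : finset.set0 :|: [set i | i \in s1] = [set i | 0 < x i].
  by apply/setP => i; rewrite !inE mem_filter sig_mem inE andbT.
have allm : forall i, i \in sg by move=> i; rewrite sig_mem inE.
have h1 := @Dcat R p G t x [set: 'I_p] ht s1 s2 finset.set0 c.
rewrite sp Q D0 in h1.
have h1' := h1 (sig_uniq _ _) (fun i _ => negbT (finset.in_set0 i)) (finset.subsetT _)
   (fun i _ => finset.in_setT i) (fun i _ => x0 i) c0 (path_head (sig_sorted _ _)).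
have us2 : uniq s2 by rewrite filter_uniq // sig_uniq.
have d2 : forall i, i \in s2 -> i \notin [set i | 0 < x i].
  by move=> i; rewrite mem_filter inE => /andP[].
have z2 : forall i, i \in s2 -> x i = 0.
  move=> i; rewrite mem_filter => /andP[h _]; apply: le_anti; rewrite x0 andbT.
  by rewrite leNgt.
set c' := last c (map x s1) in h1'.
have h2 := @Dzero R p G t x [set: 'I_p] ht s2 [set i | 0 < x i] c' us2 d2
   (finset.subsetT _) (fun i _ => finset.in_setT i) z2.
have hQ := ht [set i | 0 < x i] (finset.subsetT _).
case E1 : s1 => [|j r].
  move: Q; rewrite E1 => <-.
  have -> : finset.set0 :|: [set i : 'I_p | i \in [::]] = finset.set0.
    by apply/setP => i; rewrite !inE.
  by rewrite big_set0 G0.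
have cpos : 0 < c'.
  rewrite /c' E1 /=.
  have : last (x j) (map x r) \in x j :: map x r by exact: mem_last.
  rewrite -map_cons -E1 => /mapP [i ii ->].
  by move: ii; rewrite mem_filter => /andP[].
have := h2 (ltW cpos).
move=> h3; have h4 := le_trans h3 h1'.
apply: le_anti; rewrite hQ /=.
by rewrite pmulr_rle0 // subr_le0 in h4.
Qed.
Lemma FH_FJ (R : realType) (p : nat) (F : {set 'I_p} -> R)
  (Fmono : nondecreasing_setfun F) (J H : {set 'I_p})
  (HH : smallest_stable_containing F J H) : F H = F J.
Proof.
case: HH => Hst JH Hmin.
pose P := fun K : {set 'I_p} => (J \subset K) && (F K == F J).
have PJ : P J by rewrite /P fintype.subxx eqxx.
have [K /andP[JK /eqP FK] Kmax] := @arg_maxnP _ J P (fun K => #|K|) PJ.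
have Kst : stable F K.
  move=> B KB; rewrite ltNge; apply/negP => hB.
  have KsB := fintype.proper_sub KB.
  have PB : P B.
    apply/andP; split; first exact: fintype.subset_trans JK KsB.
    by apply/eqP; rewrite -FK; apply: le_anti; rewrite hB Fmono.
  by have := Kmax B PB; rewrite /= leqNgt proper_card.
have HK := Hmin K Kst JK.
by apply: le_anti; rewrite (Fmono _ _ JH) andbT -FK; exact: Fmono _ _ HK.
Qed.

Definition GH (R : realType) (p : nat) (F : {set 'I_p} -> R) (H : {set 'I_p}) :=
  fun A : {set 'I_p} => F (A :|: H) - F H.

Lemma GH_sub (R : realType) (p : nat) (F : {set 'I_p} -> R) (H : {set 'I_p}) :
  submodular F -> submodular (GH F H).
Proof.
move=> Fs A B; rewrite /GH; have := Fs (A :|: H) (B :|: H).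
have -> : A :|: H :|: (B :|: H) = A :|: B :|: H.
  by apply/setP => i; rewrite !inE; case: (i \in A); case: (i \in B); case: (i \in H).
have -> : (A :|: H) :&: (B :|: H) = A :&: B :|: H.
  by apply/setP => i; rewrite !inE; case: (i \in A); case: (i \in B); case: (i \in H).
lra.
Qed.

Lemma GH0 (R : realType) (p : nat) (F : {set 'I_p} -> R) (H : {set 'I_p}) :
  GH F H finset.set0 = 0.
Proof. by rewrite /GH finset.set0U subrr. Qed.

Lemma GH_mono (R : realType) (p : nat) (F : {set 'I_p} -> R) (H : {set 'I_p}) :
  nondecreasing_setfun F -> nondecreasing_setfun (GH F H).
Proof.
move=> Fm A B AB; rewrite /GH lerD2r; apply: Fm.
by apply/fintype.subsetP => i; rewrite !inE => /orP[/(fintype.subsetP AB) ->|->]; rewrite ?orbT.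
Qed.
Lemma sgn_sum (R : realType) (p : nat) (W A : {set 'I_p}) (s : 'I_p -> R) :
  A \subset W ->
  \sum_(i in W) s i * (if i \in A then (if 0 <= s i then 1 else -1) else 0) =
  \sum_(i in A) vabs s i.
Proof.
move=> AW; rewrite (big_setID A) /= [X in _ + X]big1 ?addr0; last first.
  by move=> i; rewrite inE => /andP[/negbTE -> _]; rewrite mulr0.
have -> : W :&: A = A by apply/finset.setIidPr.
apply: eq_bigr => i iA; rewrite /vabs iA.
by case: (lerP 0 (s i)) => h; [rewrite ger0_norm // mulr1 | rewrite ltr0_norm // mulrN1].
Qed.

Lemma dual_iff (R : realType) (p : nat) (F : {set 'I_p} -> R) (Fs : submodular F)
  (Fm : nondecreasing_setfun F) (H : {set 'I_p}) (Hst : stable F H) (s : 'I_p -> R) :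
  dual_Omega_contr F H s <= 1 <-> pmW (~: H) (GH F H) (vabs s).
Proof.
have GS := GH_sub H Fs; have G0 := GH0 F H; have GM := GH_mono H Fm.
have gpos : forall i, i \notin H -> 0 < GH F H [set i].
  move=> i iH; rewrite /GH subr_gt0; apply: Hst; apply/properP; split.
    by apply/fintype.subsetP => k kH; rewrite !inE kH orbT.
  by exists i; rewrite ?inE ?eqxx.
have Gnn : forall A, 0 <= GH F H A.
  by move=> A; rewrite -G0; apply: GM; exact: finset.sub0set.
pose E := (fun x : R => exists2 v : 'I_p -> R,
          Omega_contr F H v <= 1 & x = \sum_(i in ~: H) s i * v i).
have E0 : E 0.
  exists (fun _ => 0); last by rewrite big1 // => i _; rewrite mulr0.
  rewrite /Omega_contr (@lov_zero R p (~: H) (GH F H) _ GS G0) // => i.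
  by rewrite /vabs normr0.
have Eub : forall x, E x -> x <= \sum_(i in ~: H) vabs s i / GH F H [set i].
  move=> _ [v hv ->]; apply: le_trans (sum_abs _ s v) _; apply: ler_sum => i iH.
  have iH' : i \notin H by move: iH; rewrite inE.
  have gp := gpos i iH'.
  pose t := fun k => if k == i then GH F H [set i] else 0.
  have ht : pmW (~: H) (GH F H) t.
    move=> A AH; case iA: (i \in A).
      rewrite (bigD1 i) //= /t eqxx big1 ?addr0; last first.
        by move=> k /andP[_ /negbTE ->].
      by apply: GM; rewrite finset.sub1set.
    rewrite big1 // => k kA; rewrite /t; case: eqP => // ki.
    by move: kA; rewrite ki iA.
  have := lov_ub ht G0 (fun k _ => normr_ge0 (v k)).
  rewrite (bigD1 i) //= /t eqxx big1 ?addr0; last first.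
    by move=> k /andP[_ /negbTE ->]; rewrite mul0r.
  move=> h1; have h2 := le_trans h1 hv.
  rewrite ler_pdivlMr //.
  rewrite -mulrA -[X in _ <= X]mulr1; apply: ler_wpM2l; [exact: normr_ge0 | by rewrite mulrC].
have hsE : has_sup E.
  split; first by exists 0.
  by exists (\sum_(i in ~: H) vabs s i / GH F H [set i]) => x /Eub.
split.
- move=> hd A AH.
  have [->|[i iA]] := finset.set_0Vmem A; first by rewrite big_set0 G0.
  set c := GH F H A.
  have iH : i \notin H by have := fintype.subsetP AH i iA; rewrite inE.
  have cp : 0 < c.
    apply: lt_le_trans (gpos i iH) _; apply: GM; by rewrite finset.sub1set.
  pose u := fun k => if k \in A then (if 0 <= s k then 1 else -1) else (0 : R).
  pose v := fun k => u k / c.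
  have Ev : E (\sum_(k in ~: H) s k * v k).
    exists v => //; change (lovasz (~: H) (GH F H) (vabs v) <= 1).
    have -> : vabs v = (fun k => if k \in A then c^-1 else 0).
      apply: boolp.funext => k; rewrite /vabs /v /u normrM [`|c^-1|]gtr0_norm ?invr_gt0 //.
      case: (k \in A); last by rewrite normr0 mul0r.
      by case: ifP => _; rewrite ?normrN normr1 mul1r.
    apply: le_trans (lov_ind GS G0 AH _) _; first by rewrite invr_ge0 ltW.
    by rewrite mulVf ?gt_eqF.
  have := le_trans (sup_upper_bound hsE Ev) hd.
  have -> : \sum_(k in ~: H) s k * v k = (\sum_(k in A) vabs s k) / c.
    rewrite -(sgn_sum s AH) mulr_suml; apply: eq_bigr => k _.
    by rewrite /v /u mulrA.
  by rewrite ler_pdivrMr // mul1r.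
- move=> hp; apply: ge_sup; first by exists 0.
  move=> _ [v hv ->]; apply: le_trans (sum_abs _ s v) _.
  apply: le_trans hv; exact: lov_ub hp G0 (fun k _ => normr_ge0 (v k)).
Qed.
Unset Implicit Arguments.
Theorem lemma1 (R : realType) (p : nat) (F : {set 'I_p} -> R)
  (Fsub : submodular F) (Fmono : nondecreasing_setfun F) (F0 : F finset.set0 = 0)
  (Fpos : forall k : 'I_p, 0 < F [set k])
  (w : 'I_p -> R) (J H : {set 'I_p}) (HJ : J = supp w)
  (HH : smallest_stable_containing F J H) :
  subdiff [set: 'I_p] (Omega F) w =
  (fun s : 'I_p -> R =>
     [/\ subdiff J (Omega_restr F J) w s,
          (forall i, i \in H :\: J -> s i = 0) &
          dual_Omega_contr F H s <= 1]).
Proof.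
case: (HH) => Hst JH Hmin.
have FHJ := FH_FJ Fmono HH.
have x0 : forall i, 0 <= vabs w i by move=> i; exact: normr_ge0.
have wJ : forall i, i \notin J -> w i = 0 by move=> i; rewrite HJ inE negbK => /eqP.
have xJ : forall i, i \notin J -> vabs w i = 0 by move=> i /wJ wi; rewrite /vabs wi normr0.
have Jx : [set i | 0 < vabs w i] = J.
  by apply/setP => i; rewrite HJ !inE /vabs normr_gt0.
have sumJ : forall s : 'I_p -> R,
    \sum_(i in [set: 'I_p]) s i * w i = \sum_(i in J) s i * w i.
  move=> s; rewrite (big_setID J) /= [X in _ + X]big1 ?addr0; last first.
    by move=> i; rewrite inE => /andP[/wJ -> _]; rewrite mulr0.
  by rewrite finset.setTI.
have LJ : lovasz J F (vabs w) = lovasz [set: 'I_p] F (vabs w) :=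
  @lov_restr R p J F Fsub F0 (vabs w) x0 xJ.
apply: boolp.funext => s; apply: boolp.propext.
have SC := @subdiff_char R p [set: 'I_p] F Fsub F0 w s.
have SCJ := @subdiff_char R p J F Fsub F0 w s.
have DI := @dual_iff R p F Fsub Fmono H Hst s.
have abss : forall i, 0 <= vabs s i by move=> i; exact: normr_ge0.
split.
- move=> /SC [hp he].
  have hpJ : pmW J F (vabs s) by move=> A AJ; apply: hp; exact: finset.subsetT.
  have heJ : \sum_(i in J) s i * w i = lovasz J F (vabs w) by rewrite -sumJ he LJ.
  have tight : \sum_(i in J) vabs s i = F J.
    have eq2 : \sum_(i in [set: 'I_p]) vabs s i * vabs w i = lovasz [set: 'I_p] F (vabs w).
      apply: le_anti; rewrite (lov_ub hp F0 (fun i _ => x0 i)) /=.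
      by rewrite -he; exact: sum_abs.
    by have := lov_tight hp F0 x0 eq2; rewrite Jx.
  have sH : \sum_(i in H) vabs s i = F J + \sum_(i in H :\: J) vabs s i.
    by rewrite (big_setID J) /= (finset.setIidPr JH) tight.
  have hH := hp H (finset.subsetT _); rewrite sH FHJ in hH.
  have z : \sum_(i in H :\: J) vabs s i = 0.
    have z0 : 0 <= \sum_(i in H :\: J) vabs s i by apply: sumr_ge0 => i _; exact: abss.
    apply: le_anti; rewrite z0 andbT; lra.
  split.
  + by apply/SCJ.
  + move=> i iHJ; apply/normr0_eq0.
    exact: (psumr_eq0P (fun i _ => abss i) z) i iHJ.
  + apply/DI => A AH; rewrite /GH.
    have hAH := hp (A :|: H) (finset.subsetT _).
    have e1 : \sum_(i in A :|: H) vabs s i = \sum_(i in H) vabs s i + \sum_(i in A) vabs s i.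
      rewrite (big_setID H) /=.
      have -> : (A :|: H) :&: H = H by apply/setP => i; rewrite !inE; case: (i \in H); case: (i \in A).
      have -> : (A :|: H) :\: H = A.
        apply/setP => i; rewrite !inE; case iA: (i \in A) => /=.
          by have := fintype.subsetP AH i iA; rewrite inE => ->.
        by case: (i \in H).
      by [].
    have hS : F J <= \sum_(i in H) vabs s i.
      by rewrite sH lerDl sumr_ge0 // => i _; exact: abss.
    rewrite e1 in hAH; rewrite -FHJ in hS; lra.
- case=> hJ hz hd; apply/SC.
  case/SCJ: hJ => hpJ heJ.
  have hpc := DI.1 hd.
  split; last by rewrite sumJ heJ LJ.
  move=> A _.
  have e1 : \sum_(i in A) vabs s i = \sum_(i in A :&: H) vabs s i + \sum_(i in A :\: H) vabs s i.
    exact: big_setID.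
  have e2 : \sum_(i in A :&: H) vabs s i = \sum_(i in A :&: J) vabs s i.
    rewrite (big_setID J) /= [X in _ + X]big1 ?addr0; last first.
      move=> i; rewrite !inE => /andP[iJ /andP[iA iH]]; rewrite /vabs hz ?normr0 //.
      by rewrite !inE iJ iH.
    have -> : A :&: H :&: J = A :&: J; last by [].
    apply/setP => i; rewrite !inE.
    case iJ: (i \in J); rewrite ?andbF ?andbT //.
    by rewrite (fintype.subsetP JH i iJ) andbT.
  have h1 : \sum_(i in A :&: J) vabs s i <= F (A :&: J) by apply: hpJ; exact: finset.subsetIr.
  have h2 : F (A :&: J) <= F (A :&: H) by apply: Fmono; exact: finset.setIS.
  have h3 : \sum_(i in A :\: H) vabs s i <= F ((A :\: H) :|: H) - F H.
    apply: hpc; apply/fintype.subsetP => i; rewrite !inE => /andP[].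
    by move=> ->.
  have e3 : (A :\: H) :|: H = A :|: H.
    by apply/setP => i; rewrite !inE; case: (i \in H); case: (i \in A).
  have h4 := Fsub A H.
  rewrite e3 in h3; rewrite e1 e2; lra.
Qed.
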